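(* Let $X$ be a quandle, let $O(X)$ be the set of orbits of the action of $\mathrm{As}(X)$ on $X$, and for $i\in O(X)$ let $\varepsilon_i:\mathrm{As}(X)\to\mathbb{Z}$ be the homomorphism with $\varepsilon_i(e_x)=1$ if $x$ lies in the orbit $i$ and $\varepsilon_i(e_x)=0$ otherwise. If $\mathrm{Inn}(X)$ is perfect, then $\mathrm{As}(X)\cong \mathrm{Ker}(\oplus_{i\in O(X)}\varepsilon_i)\times\mathbb{Z}^{\oplus O(X)}$, and $\mathrm{Ker}(\oplus_{i\in O(X)}\varepsilon_i)$ is a perfect group which is a central extension of $\mathrm{Inn}(X)$. In particular, if $X$ is connected, $\mathrm{Inn}(X)$ is perfect and $H_2^{\mathrm{gr}}(\mathrm{Inn}(X))=0$, then $\mathrm{As}(X)\cong\mathrm{Inn}(X)\times\mathbb{Z}$.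
   Context: A quandle is a set $X$ with a binary operation $\lhd$ such that $a\lhd a=a$ for all $a$, each map $x\mapsto x\lhd a$ is a bijection of $X$, and $(a\lhd b)\lhd c=(a\lhd c)\lhd(b\lhd c)$ for all $a,b,c$. The adjoint group $\mathrm{As}(X)$ is the group with generators $e_x$ ($x\in X$) and relations $e_{x\lhd y}=e_y^{-1}e_xe_y$. It acts on $X$ from the right by $x\cdot e_y=x\lhd y$; $X$ is connected if this action is transitive. Let $\psi_X:\mathrm{As}(X)\to\mathfrak S_X$ be the corresponding homomorphism and $\mathrm{Inn}(X)=\mathrm{Im}(\psi_X)$. $H_n^{\mathrm{gr}}$ is group homology with trivial $\mathbb{Z}$ coefficients. *)

(* Defs.v *)
From Stdlib Require Import ZArith List ClassicalEpsilon FunctionalExtensionality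
  ProofIrrelevance PropExtensionality Lia.
Import ListNotations.
Set Implicit Arguments.
Unset Strict Implicit.

Record grp := Grp {
  gcar :> Type;
  gmul : gcar -> gcar -> gcar;
  gone : gcar;
  ginv : gcar -> gcar;
  gmulA : forall a b c, gmul a (gmul b c) = gmul (gmul a b) c;
  gmul1l : forall a, gmul gone a = a;
  gmul1r : forall a, gmul a gone = a;
  gmulVl : forall a, gmul (ginv a) a = gone;
  gmulVr : forall a, gmul a (ginv a) = gone }.
Arguments gmul {g} _ _.
Arguments gone {g}.
Arguments ginv {g} _.

Definition is_hom (G H : grp) (f : G -> H) : Prop :=
  forall a b, f (gmul a b) = gmul (f a) (f b).
Definition is_bij (S T : Type) (f : S -> T) : Prop :=
  exists g : T -> S, (forall x, g (f x) = x) /\ (forall y, f (g y) = y).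
Definition is_iso (G H : grp) (f : G -> H) : Prop := is_hom f /\ is_bij f.
Definition isomorphic (G H : grp) : Prop := exists f : G -> H, is_iso f.

Lemma sig_eq (T : Type) (P : T -> Prop) (x y : {t : T | P t}) :
  proj1_sig x = proj1_sig y -> x = y.
Proof.
  destruct x as [x px], y as [y py]; simpl; intros ->.
  f_equal; apply proof_irrelevance.
Qed.

(* Subgroups.  [Sub G P] is the group carried by {g | P g} whenever P is a
   subgroup (the carrier is {g | is_subgroup P -> P g}, which is exactly
   {g | P g} in that case; the guard only makes the construction total). *)
Definition is_subgroup (G : grp) (P : G -> Prop) : Prop :=
  P gone /\ (forall a b, P a -> P b -> P (gmul a b)) /\ (forall a, P a -> P (ginv a)).

Section Sub.
Variables (G : grp) (P : G -> Prop).
Definition subcar := {g : G | is_subgroup P -> P g}.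
Definition sub_mul (a b : subcar) : subcar :=
  exist (fun g => is_subgroup P -> P g) (gmul (proj1_sig a) (proj1_sig b))
    (fun S => proj1 (proj2 S) _ _ (proj2_sig a S) (proj2_sig b S)).
Definition sub_one : subcar := exist (fun g => is_subgroup P -> P g) gone (fun S => proj1 S).
Definition sub_inv (a : subcar) : subcar :=
  exist (fun g => is_subgroup P -> P g) (ginv (proj1_sig a)) (fun S => proj2 (proj2 S) _ (proj2_sig a S)).
Definition Sub : grp.
Proof.
  refine (@Grp subcar sub_mul sub_one sub_inv _ _ _ _ _);
    intros; apply sig_eq; simpl;
    [apply gmulA | apply gmul1l | apply gmul1r | apply gmulVl | apply gmulVr].
Defined.
End Sub.

Definition prodgrp (G H : grp) : grp.
Proof.
  refine (@Grp (G * H) (fun a b => (gmul (fst a) (fst b), gmul (snd a) (snd b)))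
            (gone, gone) (fun a => (ginv (fst a), ginv (snd a))) _ _ _ _ _);
  intros; simpl;
  [rewrite !gmulA | rewrite !gmul1l | rewrite !gmul1r | rewrite !gmulVl | rewrite !gmulVr];
  destruct a; reflexivity.
Defined.

Definition Zgrp : grp :=
  @Grp Z Z.add 0%Z Z.opp Z.add_assoc Z.add_0_l Z.add_0_r Z.add_opp_diag_l Z.add_opp_diag_r.

Section Dsum.
Variable I : Type.
Definition dcar := {f : I -> Z | exists l : list I, forall i, f i <> 0%Z -> In i l}.
Definition d_add (a b : dcar) : dcar.
Proof.
  exists (fun i => proj1_sig a i + proj1_sig b i)%Z.
  destruct (proj2_sig a) as [la Ha], (proj2_sig b) as [lb Hb].
  exists (la ++ lb); intros i Hi; apply in_or_app.
  destruct (Z.eq_dec (proj1_sig a i) 0) as [E|E]; [right; apply Hb; lia | left; auto].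
Defined.
Definition d_zero : dcar.
Proof. exists (fun _ => 0%Z); exists nil; intros i H; congruence. Defined.
Definition d_opp (a : dcar) : dcar.
Proof.
  exists (fun i => - proj1_sig a i)%Z.
  destruct (proj2_sig a) as [la Ha]; exists la; intros i Hi; apply Ha; lia.
Defined.
Definition Zsum : grp.
Proof.
  refine (@Grp dcar d_add d_zero d_opp _ _ _ _ _); intros; apply sig_eq;
  simpl; apply functional_extensionality; intros; simpl; lia.
Defined.
End Dsum.

(* Symmetric group of a type, with the product adapted to right actions:
   (s * t) acts as "first s, then t". *)
Section Sym.
Variable X : Type.
Definition symcar :=
  {p : (X -> X) * (X -> X) | (forall x, snd p (fst p x) = x) /\ (forall x, fst p (snd p x) = x)}.
Definition sym_mul (s t : symcar) : symcar.
Proof.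
  exists ((fun x => fst (proj1_sig t) (fst (proj1_sig s) x)),
          (fun x => snd (proj1_sig s) (snd (proj1_sig t) x))).
  destruct s as [[f f'] [H1 H2]], t as [[g g'] [K1 K2]]; simpl in *; split; intros x.
  - rewrite K1; apply H1.
  - rewrite H2; apply K2.
Defined.
Definition sym_one : symcar.
Proof. exists ((fun x => x), (fun x => x)); split; reflexivity. Defined.
Definition sym_inv (s : symcar) : symcar.
Proof.
  exists (snd (proj1_sig s), fst (proj1_sig s)).
  destruct s as [[f f'] [H1 H2]]; simpl; split; assumption.
Defined.
Definition Sym : grp.
Proof.
  refine (@Grp symcar sym_mul sym_one sym_inv _ _ _ _ _); intros;
  apply sig_eq; try reflexivity;
  destruct a as [[f f'] [H1 H2]]; simpl; f_equal; apply functional_extensionality;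
  auto.
Defined.
End Sym.

Definition commg (G : grp) (a b : G) : G :=
  gmul (gmul (gmul (ginv a) (ginv b)) a) b.

Definition perfect (G : grp) : Prop :=
  forall g : G, exists l : list (bool * (G * G)),
    g = fold_right (fun (p : bool * (G * G)) (acc : G) =>
          gmul (if fst p then commg (fst (snd p)) (snd (snd p))
                else ginv (commg (fst (snd p)) (snd (snd p)))) acc) gone l.

Definition central_ext (K I : grp) : Prop :=
  exists p : K -> I, is_hom p /\ (forall y, exists x, p x = y) /\
    (forall k, p k = gone -> forall g, gmul k g = gmul g k).

(* Group homology with trivial Z coefficients in degree 2, via the
   (inhomogeneous) bar complex.  Chains are formal Z-combinations, given as
   lists; [coef c t] is the coefficient of the basis element t in c. *)
Definition coef (T : Type) (c : list (Z * T)) (t : T) : Z :=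
  fold_right (fun (p : Z * T) (acc : Z) =>
    ((if excluded_middle_informative (snd p = t) then fst p else 0) + acc)%Z) 0%Z c.

Definition bar_d2 (G : grp) (c : list (Z * (G * G))) : list (Z * G) :=
  flat_map (fun p => let '(n, (g, h)) := p in
    [(n, h); (- n, gmul g h); (n, g)]%Z) c.
Definition bar_d3 (G : grp) (c : list (Z * (G * G * G))) : list (Z * (G * G)) :=
  flat_map (fun p => let '(n, (g, h, k)) := p in
    [(n, (h, k)); (- n, (gmul g h, k)); (n, (g, gmul h k)); (- n, (g, h))]%Z) c.

Definition H2_trivial (G : grp) : Prop :=
  forall c : list (Z * (G * G)),
    (forall t, coef (bar_d2 c) t = 0%Z) ->
    exists b : list (Z * (G * G * G)), forall t, coef (bar_d3 b) t = coef c t.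

Definition is_quandle (X : Type) (op : X -> X -> X) : Prop :=
  (forall a, op a a = a) /\
  (forall a, is_bij (fun x => op x a)) /\
  (forall a b c, op (op a b) c = op (op a c) (op b c)).

Definition conj_rel (X : Type) (op : X -> X -> X) (H : grp) (f : X -> H) : Prop :=
  forall x y, f (op x y) = gmul (gmul (ginv (f y)) (f x)) (f y).

(* (A, e) is the adjoint group As(X): the group presented by generators e_x
   and the relations above, characterised by its universal property. *)
Definition is_adjoint (X : Type) (op : X -> X -> X) (A : grp) (e : X -> A) : Prop :=
  conj_rel op e /\
  forall (H : grp) (f : X -> H), conj_rel op f ->
    exists phi : A -> H, (is_hom phi /\ forall x, phi (e x) = f x) /\
      forall phi' : A -> H, is_hom phi' -> (forall x, phi' (e x) = f x) -> phi' = phi.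

Definition is_psi (X : Type) (op : X -> X -> X) (A : grp) (e : X -> A)
  (psi : A -> Sym X) : Prop :=
  is_hom psi /\ forall y, fst (proj1_sig (psi (e y))) = (fun x => op x y).

Definition act (X : Type) (A : grp) (psi : A -> Sym X) (x : X) (g : A) : X :=
  fst (proj1_sig (psi g)) x.

Definition orbit (X : Type) (A : grp) (psi : A -> Sym X) (x : X) : X -> Prop :=
  fun y => exists g, act psi x g = y.

Definition Orb (X : Type) (A : grp) (psi : A -> Sym X) : Type :=
  {P : X -> Prop | exists x, P = orbit psi x}.

Definition connected (X : Type) (A : grp) (psi : A -> Sym X) : Prop :=
  inhabited X /\ forall x y, exists g, act psi x g = y.

Definition Inn (X : Type) (A : grp) (psi : A -> Sym X) : grp :=
  Sub (fun s : Sym X => exists g, psi g = s).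

Definition is_eps (X : Type) (A : grp) (e : X -> A) (psi : A -> Sym X)
  (i : Orb psi) (f : A -> Zgrp) : Prop :=
  is_hom f /\ forall x, (proj1_sig i x -> f (e x) = 1%Z) /\
                        (~ proj1_sig i x -> f (e x) = 0%Z).

Definition Kset (X : Type) (A : grp) (e : X -> A) (psi : A -> Sym X) : A -> Prop :=
  fun g => forall (i : Orb psi) (f : A -> Zgrp), @is_eps X A e psi i f -> f g = 0%Z.
Definition Kgrp (X : Type) (A : grp) (e : X -> A) (psi : A -> Sym X) : grp :=
  Sub (Kset e psi).

Arguments is_adjoint {X} op A e.
Arguments is_psi {X} op A e psi.

(* Main.v *)
Require Import Defs.
From Stdlib Require Import ZArith List ClassicalEpsilon FunctionalExtensionality
  ProofIrrelevance PropExtensionality Lia.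
Import ListNotations.
Set Implicit Arguments.
Unset Strict Implicit.

Section G.
Variable G : grp.

Lemma mulcl (a b c : G) : gmul a b = gmul a c -> b = c.
Proof. intro H. rewrite <- (gmul1l b), <- (gmul1l c), <- (gmulVl a), <- !gmulA, H. reflexivity. Qed.
Lemma mulcr (a b c : G) : gmul b a = gmul c a -> b = c.
Proof. intro H. rewrite <- (gmul1r b), <- (gmul1r c), <- (gmulVr a), !gmulA, H. reflexivity. Qed.
Lemma inv_uniq (a b : G) : gmul a b = gone -> b = ginv a.
Proof. intro H. apply (mulcl (a:=a)). rewrite H, gmulVr. reflexivity. Qed.
Lemma inv_inv (a : G) : ginv (ginv a) = a.
Proof. symmetry. apply inv_uniq. apply gmulVl. Qed.
Lemma inv_mul (a b : G) : ginv (gmul a b) = gmul (ginv b) (ginv a).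
Proof. symmetry. apply inv_uniq. rewrite gmulA, <- (gmulA a b), gmulVr, gmul1r, gmulVr. reflexivity. Qed.
Lemma inv_one : ginv (@gone G) = gone.
Proof. symmetry. apply inv_uniq. apply gmul1l. Qed.

Definition central (g : G) := forall h : G, gmul g h = gmul h g.

Lemma central_sub : is_subgroup central.
Proof.
  split; [|split]; unfold central; intros.
  - rewrite gmul1l, gmul1r. reflexivity.
  - rewrite <- gmulA, H0, gmulA, H, <- gmulA. reflexivity.
  - apply (mulcl (a:=a)). rewrite gmulA, gmulVr, gmul1l, gmulA, H, <- gmulA, gmulVr, gmul1r. reflexivity.
Qed.

Fixpoint npow (g : G) (k : nat) : G := match k with O => gone | S k => gmul g (npow g k) end.
Lemma npow_S_r g k : npow g (S k) = gmul (npow g k) g.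
Proof.
  induction k; simpl. rewrite gmul1r, gmul1l; reflexivity.
  simpl in IHk. rewrite IHk at 1. rewrite gmulA. reflexivity.
Qed.

Definition zpow (g : G) (n : Z) : G :=
  if Z.leb 0 n then npow g (Z.to_nat n) else npow (ginv g) (Z.to_nat (- n)).

Lemma zpow0 g : zpow g 0 = gone. Proof. reflexivity. Qed.
Lemma zpow1 g : zpow g 1 = g. Proof. unfold zpow; simpl. apply gmul1r. Qed.

Lemma zpow_succ g n : zpow g (n + 1) = gmul (zpow g n) g.
Proof.
  unfold zpow. destruct (Z.leb_spec 0 n).
  - destruct (Z.leb_spec 0 (n+1)); [|lia].
    replace (Z.to_nat (n+1)) with (S (Z.to_nat n)) by lia. apply npow_S_r.
  - destruct (Z.leb_spec 0 (n+1)).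
    + assert (n = -1)%Z by lia. subst. simpl. rewrite gmul1r, gmulVl. reflexivity.
    + replace (Z.to_nat (- n)) with (S (Z.to_nat (- (n+1)))) by lia.
      rewrite npow_S_r, <- gmulA, gmulVl, gmul1r. reflexivity.
Qed.

Lemma zpow_pred g n : zpow g (n - 1) = gmul (zpow g n) (ginv g).
Proof.
  replace n with ((n - 1) + 1)%Z at 2 by lia. rewrite zpow_succ, <- gmulA, gmulVr, gmul1r. reflexivity.
Qed.

Lemma zpow_add g n m : zpow g (n + m) = gmul (zpow g n) (zpow g m).
Proof.
  induction m using Z.peano_ind.
  - rewrite Z.add_0_r, zpow0, gmul1r. reflexivity.
  - rewrite <- Z.add_1_r, Z.add_assoc, !zpow_succ, IHm, gmulA. reflexivity.
  - rewrite <- Z.sub_1_r, Z.add_sub_assoc, !zpow_pred, IHm, gmulA. reflexivity.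
Qed.

Lemma zpow_opp g n : zpow g (- n) = ginv (zpow g n).
Proof. apply inv_uniq. rewrite <- zpow_add, Z.add_opp_diag_r. reflexivity. Qed.

Lemma sub_zpow (P : G -> Prop) g n : is_subgroup P -> P g -> P (zpow g n).
Proof.
  intros [H1 [H2 H3]] Hg. induction n using Z.peano_ind.
  - exact H1.
  - rewrite <- Z.add_1_r, zpow_succ. auto.
  - rewrite <- Z.sub_1_r, zpow_pred. auto.
Qed.

Lemma zpow_mulc a c n : central a -> central c -> zpow (gmul a c) n = gmul (zpow a n) (zpow c n).
Proof.
  intros Ha Hc. induction n using Z.peano_ind.
  - rewrite !zpow0, gmul1l. reflexivity.
  - rewrite <- Z.add_1_r, !zpow_succ, IHn.
    rewrite !gmulA. f_equal. rewrite <- !gmulA. f_equal. first [apply Ha | symmetry; apply Ha].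
  - rewrite <- Z.sub_1_r, !zpow_pred, IHn. apply (mulcr (a:=(gmul a c))).
    rewrite <- !gmulA, gmulVl, gmul1r. f_equal.
    rewrite (Ha c), (gmulA (ginv c)), gmulVl, gmul1l, <- (Ha (zpow c n)), gmulA, gmulVl, gmul1l.
    reflexivity.
Qed.

End G.
Section Hom.
Variables (G H : grp) (f : G -> H).
Hypothesis Hf : is_hom f.
Lemma hom_one : f gone = gone.
Proof. apply (mulcl (a:=(f gone))). rewrite <- Hf, !gmul1r. reflexivity. Qed.
Lemma hom_inv a : f (ginv a) = ginv (f a).
Proof. apply inv_uniq. rewrite <- Hf, gmulVr. apply hom_one. Qed.
Lemma hom_zpow g n : f (zpow g n) = zpow (f g) n.
Proof.
  induction n using Z.peano_ind.
  - apply hom_one.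
  - rewrite <- Z.add_1_r, !zpow_succ, Hf, IHn. reflexivity.
  - rewrite <- Z.sub_1_r, !zpow_pred, Hf, IHn, hom_inv. reflexivity.
Qed.
End Hom.

Lemma coef_app T (l1 l2 : list (Z * T)) t : coef (l1 ++ l2) t = (coef l1 t + coef l2 t)%Z.
Proof. induction l1; simpl. reflexivity. rewrite IHl1. lia. Qed.

Definition negl T (l : list (Z * T)) := map (fun p => (- fst p, snd p)%Z) l.
Lemma coef_negl T (l : list (Z * T)) t : coef (negl l) t = (- coef l t)%Z.
Proof.
  induction l; simpl. reflexivity. rewrite IHl.
  destruct (excluded_middle_informative (snd a = t)); simpl; lia.
Qed.

Definition fN T (t0 : T) (l : list (Z * T)) :=
  filter (fun p => if excluded_middle_informative (snd p = t0) then false else true) l.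

Lemma coef_fN T (t0 : T) l t : coef (fN t0 l) t = if excluded_middle_informative (t = t0) then 0%Z else coef l t.
Proof.
  induction l as [|[n s] l IH]; simpl.
  - destruct (excluded_middle_informative (t = t0)); reflexivity.
  - destruct (excluded_middle_informative (s = t0)); simpl.
    + subst s. rewrite IH. destruct (excluded_middle_informative (t = t0)).
      * subst t. destruct (excluded_middle_informative (t0 = t0)); [|congruence]. reflexivity.
      * destruct (excluded_middle_informative (t0 = t)); [congruence|]. lia.
    + rewrite IH. destruct (excluded_middle_informative (t = t0)).
      * subst t. destruct (excluded_middle_informative (s = t0)); [congruence|]. reflexivity.
      * reflexivity.
Qed.

Lemma zpow_central (G : grp) (g : G) n : central g -> central (zpow g n).
Proof. intro H. apply sub_zpow; [apply central_sub | exact H]. Qed.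

Section WP.
Variables (G : grp) (T : Type) (phi : T -> G).
Hypothesis Hc : forall t, central (phi t).

Definition wprod (l : list (Z * T)) : G :=
  fold_right (fun p acc => gmul (zpow (phi (snd p)) (fst p)) acc) gone l.

Lemma wprod_cons q l : wprod (q :: l) = gmul (zpow (phi (snd q)) (fst q)) (wprod l).
Proof. reflexivity. Qed.

Lemma wprod_app l1 l2 : wprod (l1 ++ l2) = gmul (wprod l1) (wprod l2).
Proof. induction l1; simpl. rewrite gmul1l; reflexivity. rewrite IHl1, gmulA. reflexivity. Qed.

Lemma wprod_sub (P : G -> Prop) l : is_subgroup P -> (forall t, P (phi t)) -> P (wprod l).
Proof.
  intros HP Ht. induction l; simpl. apply HP.
  apply HP. apply sub_zpow; auto. auto.
Qed.

Lemma wprod_central l : central (wprod l).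
Proof. apply wprod_sub. apply central_sub. exact Hc. Qed.

Lemma wprod_split t0 l : wprod l = gmul (zpow (phi t0) (coef l t0)) (wprod (fN t0 l)).
Proof.
  induction l as [|[n s] l IH]; simpl.
  - rewrite zpow0, gmul1l. reflexivity.
  - destruct (excluded_middle_informative (s = t0)); simpl.
    + subst. rewrite IH, zpow_add, gmulA. reflexivity.
    + rewrite IH, !gmulA. f_equal.
      symmetry. apply zpow_central. apply Hc.
Qed.

Lemma wprod_zero l : (forall t, coef l t = 0%Z) -> wprod l = gone.
Proof.
  remember (length l) as k. revert l Heqk.
  induction k as [k IHk] using lt_wf_ind. intros l Hk Hz.
  destruct l as [|[n t0] r]. reflexivity.
  rewrite (wprod_split t0), Hz, zpow0, gmul1l.
  apply (IHk (length (fN t0 ((n, t0) :: r)))); [|reflexivity|].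
  - subst. simpl. destruct (excluded_middle_informative (t0 = t0)); [|congruence].
    unfold fN. pose proof (filter_length_le (fun p : Z * T => if excluded_middle_informative (snd p = t0) then false else true) r). simpl. lia.
  - intros t. rewrite coef_fN. destruct (excluded_middle_informative (t = t0)). reflexivity. apply Hz.
Qed.

Lemma wprod_negl l : wprod (negl l) = ginv (wprod l).
Proof.
  induction l; simpl. symmetry; apply inv_one.
  rewrite IHl, inv_mul, zpow_opp. rewrite <- zpow_opp. apply zpow_central. apply Hc.
Qed.

Lemma wprod_coef l l' : (forall t, coef l t = coef l' t) -> wprod l = wprod l'.
Proof.
  intros H. assert (wprod (l ++ negl l') = gone).
  { apply wprod_zero. intros t. rewrite coef_app, coef_negl, H. lia. }
  rewrite wprod_app, wprod_negl in H0. apply (mulcr (a:=(ginv (wprod l')))). rewrite H0, gmulVr. reflexivity.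
Qed.
End WP.
Lemma commg_inv (G : grp) (a b : G) : ginv (commg a b) = commg b a.
Proof. unfold commg. rewrite !inv_mul, !inv_inv, !gmulA. reflexivity. Qed.

Lemma commg_cl (G : grp) (s c y : G) : central c -> commg (gmul s c) y = commg s y.
Proof.
  intro Hc. unfold commg. rewrite inv_mul. rewrite <- (Hc s).
  rewrite (gmulA _ c s), <- (Hc (gmul (gmul (ginv c) (ginv s)) (ginv y))), !gmulA, gmulVr, gmul1l. reflexivity.
Qed.

Lemma commg_cr (G : grp) (x t d : G) : central d -> commg x (gmul t d) = commg x t.
Proof.
  intro Hd. rewrite <- (inv_inv (commg x (gmul t d))), commg_inv, commg_cl, <- commg_inv, inv_inv; auto.
Qed.

Definition ind (T : Type) (t u : T) : Z := if excluded_middle_informative (t = u) then 1%Z else 0%Z.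
Lemma coef_cons T n (t : T) l u : coef ((n, t) :: l) u = (n * ind t u + coef l u)%Z.
Proof. simpl. unfold ind. destruct (excluded_middle_informative (t = u)); lia. Qed.
Lemma coef_nil T (u : T) : coef nil u = 0%Z. Proof. reflexivity. Qed.

Section H2.
Variables (K G : grp) (p : K -> G).
Hypotheses (Hp : is_hom p) (Hsurj : forall y, exists x, p x = y)
  (Hker : forall k, p k = gone -> forall g, gmul k g = gmul g k)
  (Hperf : perfect K) (HH2 : H2_trivial G).

Definition sig0 (y : G) : K := proj1_sig (constructive_indefinite_description _ (Hsurj y)).
Definition sig (y : G) : K := if excluded_middle_informative (y = gone) then gone else sig0 y.
Lemma p_sig y : p (sig y) = y.
Proof.
  unfold sig. destruct (excluded_middle_informative (y = gone)).
  - subst. apply hom_one; auto.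
  - unfold sig0. destruct (constructive_indefinite_description _ (Hsurj y)). auto.
Qed.
Lemma sig_one : sig gone = gone.
Proof. unfold sig. destruct (excluded_middle_informative (@gone G = gone)); congruence. Qed.

Definition fc (t : G * G) : K := gmul (gmul (sig (fst t)) (sig (snd t))) (ginv (sig (gmul (fst t) (snd t)))).
Lemma fc_central t : central (fc t).
Proof.
  intro h. apply Hker. unfold fc. rewrite !Hp, hom_inv, !p_sig; auto. apply gmulVr.
Qed.
Lemma fc_rel g h : gmul (sig g) (sig h) = gmul (fc (g, h)) (sig (gmul g h)).
Proof. unfold fc; simpl. rewrite <- gmulA, gmulVl, gmul1r. reflexivity. Qed.
Lemma fc_cocycle g h k : gmul (fc (g, h)) (fc (gmul g h, k)) = gmul (fc (h, k)) (fc (g, gmul h k)).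
Proof.
  apply (mulcr (a := sig (gmul (gmul g h) k))).
  transitivity (gmul (gmul (sig g) (sig h)) (sig k)).
  - rewrite <- gmulA, <- (fc_rel (gmul g h) k), gmulA, <- (fc_rel g h). reflexivity.
  - rewrite <- (gmulA (fc (h, k))), <- (gmulA g h k), <- (fc_rel g (gmul h k)).
    rewrite gmulA, (fc_central (h, k) (sig g)), <- gmulA, <- (gmulA (sig g) (fc (h, k))), <- (fc_rel h k). reflexivity.
Qed.

Lemma wprod_d3 b : wprod fc (bar_d3 b) = gone.
Proof.
  induction b as [|[n [[g h] k]] b IH]. reflexivity.
  unfold bar_d3 in *. simpl flat_map. rewrite !wprod_cons, IH, gmul1r. simpl.
  rewrite !zpow_opp.
  set (a1 := zpow (fc (h, k)) n). set (a2 := zpow (fc (gmul g h, k)) n).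
  set (a3 := zpow (fc (g, gmul h k)) n). set (a4 := zpow (fc (g, h)) n).
  assert (E : gmul a1 a3 = gmul a4 a2).
  { unfold a1, a2, a3, a4. rewrite <- !zpow_mulc by apply fc_central. rewrite fc_cocycle. reflexivity. }
  assert (C3 : central a3) by (apply zpow_central, fc_central).
  rewrite (gmulA (ginv a2)), <- (C3 (ginv a2)), <- (gmulA a3), (gmulA a1), E.
  rewrite <- !gmulA, (gmulA a2), gmulVr, gmul1l, gmulVr. reflexivity.
Qed.

Definition letter (l : bool * G) : K := if fst l then sig (snd l) else ginv (sig (snd l)).
Definition val (w : list (bool * G)) : K := fold_right (fun (l : bool * G) (acc : K) => gmul (letter l) acc) gone w.
Definition tgt (w : list (bool * G)) : G :=
  fold_right (fun (l : bool * G) (acc : G) => gmul (if fst l then snd l else ginv (snd l)) acc) gone w.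
Fixpoint ch (w : list (bool * G)) : list (Z * (G * G)) :=
  match w with
  | nil => nil
  | (true, x) :: w' => (1%Z, (x, tgt w')) :: ch w'
  | (false, x) :: w' => ((-1)%Z, (x, gmul (ginv x) (tgt w'))) :: ch w'
  end.
Definition Nw (w : list (bool * G)) : list (Z * G) := map (fun (l : bool * G) => (if fst l then 1%Z else (-1)%Z, snd l)) w.

Lemma val_eq w : val w = gmul (wprod fc (ch w)) (sig (tgt w)).
Proof.
  induction w as [|[[|] x] w IH].
  - simpl. rewrite sig_one, gmul1l. reflexivity.
  - change (gmul (sig x) (val w) = gmul (wprod fc ((1%Z,(x,tgt w)) :: ch w)) (sig (gmul x (tgt w)))).
    rewrite IH, wprod_cons, zpow1. simpl.
    set (W := wprod fc (ch w)).
    assert (CW : central W) by (apply wprod_central; exact fc_central).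
    rewrite (gmulA (sig x) W), <- (CW (sig x)), <- gmulA, (fc_rel x (tgt w)), !gmulA, (CW (fc _)).
    reflexivity.
  - change (gmul (ginv (sig x)) (val w) = gmul (wprod fc (((-1)%Z,(x,gmul (ginv x) (tgt w))) :: ch w)) (sig (gmul (ginv x) (tgt w)))).
    rewrite IH, wprod_cons. simpl.
    set (t := tgt w).
    replace (sig t) with (gmul (ginv (fc (x, gmul (ginv x) t))) (gmul (sig x) (sig (gmul (ginv x) t)))).
    2:{ rewrite (fc_rel x (gmul (ginv x) t)), gmulA, gmulVl, gmul1l, gmulA, gmulVr, gmul1l. reflexivity. }
    replace ((-1)%Z) with (- (1))%Z by reflexivity. rewrite zpow_opp, zpow1.
    set (F := fc _). set (W := wprod fc (ch w)).
    assert (CF : central F) by apply fc_central.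
    assert (CW : central W) by (apply wprod_central; exact fc_central).
    assert (CF' : central (ginv F)) by (apply central_sub; exact CF).
    rewrite (gmulA (ginv F)), (CF' (sig x)), (gmulA W), (gmulA W), (CW (sig x)).
    rewrite !gmulA, gmulVl, gmul1l, (CW (ginv F)). reflexivity.
Qed.
Lemma p_val w : p (val w) = tgt w.
Proof.
  induction w as [|[[|] x] w IH].
  - apply hom_one; auto.
  - change (p (gmul (sig x) (val w)) = gmul x (tgt w)). rewrite Hp, IH, p_sig. reflexivity.
  - change (p (gmul (ginv (sig x)) (val w)) = gmul (ginv x) (tgt w)).
    rewrite Hp, IH, hom_inv, p_sig; auto.
Qed.

Lemma bar_d2_cons n (g h : G) l : bar_d2 ((n, (g, h)) :: l) = [(n, h); (- n, gmul g h); (n, g)]%Z ++ bar_d2 l.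
Proof. reflexivity. Qed.

Lemma d2_eq w u : coef (bar_d2 (ch w)) u = (coef (Nw w) u - ind (tgt w) u + ind gone u)%Z.
Proof.
  induction w as [|[[|] x] w IH].
  - simpl. lia.
  - change (coef (bar_d2 ((1%Z,(x,tgt w)) :: ch w)) u = (coef ((1%Z, x) :: Nw w) u - ind (gmul x (tgt w)) u + ind gone u)%Z).
    rewrite bar_d2_cons, coef_app, !coef_cons, coef_nil, IH. lia.
  - change (coef (bar_d2 (((-1)%Z,(x,gmul (ginv x) (tgt w))) :: ch w)) u = (coef (((-1)%Z, x) :: Nw w) u - ind (gmul (ginv x) (tgt w)) u + ind gone u)%Z).
    rewrite bar_d2_cons, coef_app, !coef_cons, coef_nil, IH.
    rewrite gmulA, gmulVr, gmul1l. lia.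
Qed.

Lemma val_app w1 w2 : val (w1 ++ w2) = gmul (val w1) (val w2).
Proof.
  induction w1; simpl. rewrite gmul1l; reflexivity. rewrite IHw1, gmulA. reflexivity.
Qed.

Definition blk (q : bool * (K * K)) : list (bool * G) :=
  let a := p (fst (snd q)) in let b := p (snd (snd q)) in
  if fst q then [(false, a); (false, b); (true, a); (true, b)]
  else [(false, b); (false, a); (true, b); (true, a)].

Lemma sig_p u : exists c, u = gmul (sig (p u)) c /\ central c.
Proof.
  exists (gmul (ginv (sig (p u))) u). split.
  - rewrite gmulA, gmulVr, gmul1l. reflexivity.
  - intro h. apply Hker. rewrite Hp, hom_inv, p_sig; auto. apply gmulVl.
Qed.

Lemma commg_sig u v : commg u v = commg (sig (p u)) (sig (p v)).
Proof.
  destruct (sig_p u) as [c [Eu Cc]], (sig_p v) as [d [Ev Cd]].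
  rewrite Eu at 1. rewrite Ev at 1. rewrite commg_cl, commg_cr; auto.
Qed.

Lemma val_blk q : val (blk q) =
  (if fst q then commg (fst (snd q)) (snd (snd q)) else ginv (commg (fst (snd q)) (snd (snd q)))).
Proof.
  destruct q as [[|] [u v]]; unfold blk; simpl.
  - rewrite commg_sig. unfold val, letter, commg; simpl. rewrite gmul1r, !gmulA. reflexivity.
  - rewrite commg_inv, commg_sig. unfold val, letter, commg; simpl. rewrite gmul1r, !gmulA. reflexivity.
Qed.

Lemma Nw_blk q u : coef (Nw (blk q)) u = 0%Z.
Proof.
  destruct q as [[|] [a b]]; unfold blk, Nw; simpl map; rewrite !coef_cons, coef_nil; lia.
Qed.

Lemma inj_main k : p k = gone -> k = gone.
Proof.
  intro Hk. destruct (Hperf k) as [L HL].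
  set (w := flat_map blk L).
  assert (Ev : val w = k).
  { rewrite HL. unfold w. clear HL Hk w. induction L as [|q L IH]. reflexivity.
    simpl flat_map. rewrite val_app, IH, val_blk. reflexivity. }
  assert (Et : tgt w = gone) by (rewrite <- p_val, Ev; exact Hk).
  assert (EN : forall u, coef (Nw w) u = 0%Z).
  { intro u. unfold w. clear HL Hk Ev Et w. induction L as [|q L IH]. reflexivity.
    simpl flat_map. unfold Nw in *. rewrite map_app, coef_app, IH. fold (Nw (blk q)). rewrite Nw_blk. reflexivity. }
  assert (HD : forall u, coef (bar_d2 (ch w)) u = 0%Z).
  { intro u. rewrite d2_eq, EN, Et. unfold ind. lia. }
  destruct (HH2 HD) as [b Hb].
  rewrite <- Ev, val_eq, Et, sig_one, gmul1r.
  rewrite <- (wprod_coef fc_central Hb). apply wprod_d3.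
Qed.
End H2.
Definition cterm (G : grp) (q : bool * (G * G)) : G :=
  if fst q then commg (fst (snd q)) (snd (snd q)) else ginv (commg (fst (snd q)) (snd (snd q))).
Definition cfold (G : grp) (l : list (bool * (G * G))) : G :=
  fold_right (fun q acc => gmul (cterm q) acc) gone l.

Lemma perfect_iff (G : grp) : perfect G <-> forall g : G, exists l, g = cfold l.
Proof. reflexivity. Qed.

Lemma cfold_app (G : grp) (l1 l2 : list (bool * (G * G))) : cfold (l1 ++ l2) = gmul (cfold l1) (cfold l2).
Proof. induction l1; simpl. rewrite gmul1l; reflexivity. rewrite IHl1, gmulA. reflexivity. Qed.

Definition flipq (G : grp) (q : bool * (G * G)) := (negb (fst q), snd q).
Lemma cfold_inv (G : grp) (l : list (bool * (G * G))) : ginv (cfold l) = cfold (rev (map (@flipq G) l)).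
Proof.
  induction l as [|q l IH]; simpl. apply inv_one.
  rewrite inv_mul, IH, cfold_app. f_equal. simpl. rewrite gmul1r.
  unfold cterm, flipq; simpl. destruct (fst q); simpl; auto. apply inv_inv.
Qed.

Definition mapq (G H : grp) (f : G -> H) (q : bool * (G * G)) : bool * (H * H) :=
  (fst q, (f (fst (snd q)), f (snd (snd q)))).
Lemma hom_cfold (G H : grp) (f : G -> H) l : is_hom f -> f (cfold l) = cfold (map (mapq f) l).
Proof.
  intro Hf. induction l as [|q l IH]; simpl. apply hom_one; auto.
  rewrite Hf, IH. f_equal. unfold cterm, mapq, commg; simpl.
  destruct (fst q); rewrite ?(hom_inv Hf), !Hf, !(hom_inv Hf); reflexivity.
Qed.

Lemma cfold_Z (l : list (bool * (Zgrp * Zgrp))) : cfold l = 0%Z.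
Proof.
  induction l as [|q l IH]; simpl. reflexivity. rewrite IH.
  unfold cterm, commg; destruct (fst q); simpl; lia.
Qed.

Lemma zpow_Z (x : Zgrp) n : zpow x n = (n * x)%Z.
Proof.
  induction n using Z.peano_ind.
  - reflexivity.
  - rewrite <- Z.add_1_r, zpow_succ, IHn. simpl. lia.
  - rewrite <- Z.sub_1_r, zpow_pred, IHn. simpl. lia.
Qed.

Lemma proj1_hom (G : grp) (P : G -> Prop) : is_hom (fun x : Sub P => proj1_sig x).
Proof. intros a b. reflexivity. Qed.

Lemma Zsum_eq (I : Type) (a b : Zsum I) : (forall i, proj1_sig a i = proj1_sig b i) -> a = b.
Proof. intro H. apply sig_eq. apply functional_extensionality. exact H. Qed.

Lemma prod_eq (G H : grp) (a b : prodgrp G H) : fst a = fst b -> snd a = snd b -> a = b.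
Proof. destruct a, b; simpl; intros; subst; reflexivity. Qed.

Lemma iso_of_inj (G H : grp) (f : G -> H) : is_hom f -> (forall y, exists x, f x = y) ->
  (forall x, f x = gone -> x = gone) -> is_iso f.
Proof.
  intros Hf Hs Hk. split; auto.
  exists (fun y => proj1_sig (constructive_indefinite_description _ (Hs y))). split.
  - intro x. destruct (constructive_indefinite_description _ (Hs (f x))) as [x' E]. simpl.
    assert (gmul x' (ginv x) = gone) as E2.
    { apply Hk. rewrite Hf, hom_inv, E; auto. apply gmulVr. }
    apply (mulcr (a := ginv x)). rewrite E2, gmulVr. reflexivity.
  - intro y. destruct (constructive_indefinite_description _ (Hs y)). auto.
Qed.

Lemma iso_comp (G H L : grp) (f : G -> H) (g : H -> L) : is_iso f -> is_iso g -> is_iso (fun x => g (f x)).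
Proof.
  intros [Hf [f' [F1 F2]]] [Hg [g' [G1 G2]]]. split.
  - intros a b. rewrite Hf, Hg. reflexivity.
  - exists (fun y => f' (g' y)). split; intros; rewrite ?G1, ?F1, ?F2, ?G2; reflexivity.
Qed.

Lemma iso_prod (G H G' H' : grp) (f : G -> G') (g : H -> H') : is_iso f -> is_iso g ->
  is_iso (fun x : prodgrp G H => (f (fst x), g (snd x)) : prodgrp G' H').
Proof.
  intros [Hf [f' [F1 F2]]] [Hg [g' [G1 G2]]]. split.
  - intros [a b] [c d]. simpl. rewrite Hf, Hg. reflexivity.
  - exists (fun y : prodgrp G' H' => (f' (fst y), g' (snd y)) : prodgrp G H). split; intros [a b]; simpl;
    rewrite ?G1, ?F1, ?F2, ?G2; reflexivity.
Qed.
Import ListNotations.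
Set Implicit Arguments.
Unset Strict Implicit.

Section Q.
Variables (X : Type) (op : X -> X -> X) (A : grp) (e : X -> A) (psi : A -> Sym X).
Hypotheses (Hq : is_quandle op) (Hadj : is_adjoint op A e) (Hpsi : is_psi op A e psi).

Lemma psi_hom : is_hom psi. Proof. apply Hpsi. Qed.

Lemma act_mul x g h : act psi x (gmul g h) = act psi (act psi x g) h.
Proof. unfold act. rewrite psi_hom. reflexivity. Qed.
Lemma act_one x : act psi x gone = x.
Proof. unfold act. rewrite (hom_one psi_hom). reflexivity. Qed.
Lemma act_inv x g : act psi (act psi x g) (ginv g) = x.
Proof. rewrite <- act_mul, gmulVr. apply act_one. Qed.
Lemma act_inv' x g : act psi (act psi x (ginv g)) g = x.
Proof. rewrite <- act_mul, gmulVl. apply act_one. Qed.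
Lemma act_e x y : act psi x (e y) = op x y.
Proof. unfold act. rewrite (proj2 Hpsi). reflexivity. Qed.

Lemma gen (P : A -> Prop) : is_subgroup P -> (forall x, P (e x)) -> forall g, P g.
Proof.
  intros HP He g.
  set (e' := fun x => exist (fun g => is_subgroup P -> P g) (e x) (fun _ => He x) : Sub P).
  destruct Hadj as [Hc Hu].
  destruct (Hu (Sub P) e') as [phi [[Hphi Hphie] _]].
  { intros x y. apply sig_eq. simpl. apply Hc. }
  destruct (Hu A e Hc) as [phi0 [_ U]].
  assert (E1 : (fun g => proj1_sig (phi g)) = phi0).
  { apply U. intros a b. rewrite Hphi. reflexivity. intro x. rewrite Hphie. reflexivity. }
  assert (E2 : (fun g : A => g) = phi0).
  { apply U. intros a b. reflexivity. reflexivity. }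
  assert (g = proj1_sig (phi g)).
  { rewrite <- E1 in E2. exact (f_equal (fun F => F g) E2). }
  rewrite H. apply (proj2_sig (phi g)). exact HP.
Qed.

Lemma e_conj : forall g x, e (act psi x g) = gmul (gmul (ginv g) (e x)) g.
Proof.
  apply (gen (P := fun g => forall x, e (act psi x g) = gmul (gmul (ginv g) (e x)) g)). split; [|split]; cbv beta.
  - intro x. rewrite act_one, inv_one, gmul1l, gmul1r. reflexivity.
  - intros a b Ha Hb x. rewrite act_mul, Hb, Ha, inv_mul, !gmulA. reflexivity.
  - intros a Ha x. set (y := act psi x (ginv a)).
    assert (E : e x = gmul (gmul (ginv a) (e y)) a) by (rewrite <- Ha; unfold y; rewrite act_inv'; reflexivity).
    rewrite E, inv_inv, !gmulA, gmulVr, gmul1l, <- gmulA, gmulVr, gmul1r. reflexivity.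
  - cbv beta. intros y x. rewrite act_e. apply (proj1 Hadj).
Qed.

Lemma ker_central g : psi g = gone -> forall h, gmul g h = gmul h g.
Proof.
  intro Hg. apply (gen (P := fun h => gmul g h = gmul h g)).
  - split; [|split]; cbv beta.
    + rewrite gmul1l, gmul1r. reflexivity.
    + intros a b Ha Hb. rewrite gmulA, Ha, <- gmulA, Hb, gmulA. reflexivity.
    + intros a Ha. apply (mulcl (a := a)). rewrite gmulA, <- Ha, <- gmulA, gmulVr, gmulA, gmulVr, gmul1l, gmul1r. reflexivity.
  - cbv beta. intro x. assert (act psi x g = x) by (unfold act; rewrite Hg; reflexivity).
    pose proof (e_conj g x) as E. rewrite H in E. rewrite E at 1. rewrite !gmulA, gmulVr, gmul1l. reflexivity.
Qed.

Definition Acomm (g : A) : Prop := exists l, g = cfold l.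
Lemma Acomm_sub : is_subgroup Acomm.
Proof.
  split; [|split].
  - exists nil. reflexivity.
  - intros a b [l1 E1] [l2 E2]. exists (l1 ++ l2). rewrite cfold_app; subst; reflexivity.
  - intros a [l E]. exists (rev (map (@flipq A) l)). rewrite <- cfold_inv; subst; reflexivity.
Qed.
Lemma Acomm_commg a h : Acomm (commg a h).
Proof. exists [(true, (a, h))]. simpl. rewrite gmul1r. reflexivity. Qed.

Lemma eps_Acomm (f : A -> Zgrp) b : is_hom f -> Acomm b -> f b = 0%Z.
Proof. intros Hf [l E]. subst. rewrite (hom_cfold _ Hf). apply cfold_Z. Qed.

Definition InnP (s : Sym X) : Prop := exists g, psi g = s.
Lemma InnP_sub : is_subgroup InnP.
Proof.
  split; [|split].
  - exists gone. apply (hom_one psi_hom).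
  - intros a b [g Eg] [h Eh]. exists (gmul g h). rewrite psi_hom; subst; reflexivity.
  - intros a [g Eg]. exists (ginv g). rewrite (hom_inv psi_hom); subst; reflexivity.
Qed.

Definition lift (y : Inn psi) : A :=
  proj1_sig (constructive_indefinite_description _ (proj2_sig y InnP_sub)).
Lemma psi_lift y : psi (lift y) = proj1_sig y.
Proof. unfold lift. destruct (constructive_indefinite_description _ _). auto. Qed.

Hypothesis Hperf : perfect (Inn psi).

Lemma comm_lift g : exists a, Acomm a /\ psi a = psi g.
Proof.
  set (y := exist (fun s => is_subgroup InnP -> InnP s) (psi g) (fun _ => ex_intro _ g eq_refl) : Inn psi).
  destruct (Hperf y) as [L HL]. change (y = cfold L) in HL.
  exists (cfold (map (mapq lift) L)). split.
  - eexists; reflexivity.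
  - rewrite (hom_cfold _ psi_hom).
    assert (E : psi g = proj1_sig y) by reflexivity. rewrite E, HL.
    rewrite (hom_cfold _ (@proj1_hom _ InnP)). rewrite map_map. f_equal.
    apply map_ext. intro q. unfold mapq; simpl. rewrite !psi_lift. reflexivity.
Qed.

Definition orb_of (x : X) : Orb psi := exist _ (orbit psi x) (ex_intro _ x eq_refl).
Lemma orbit_refl x : orbit psi x x.
Proof. exists gone. apply act_one. Qed.
Lemma orbit_trans x y z : orbit psi x y -> orbit psi y z -> orbit psi x z.
Proof. intros [g Hg] [h Hh]. exists (gmul g h). rewrite act_mul, Hg. exact Hh. Qed.
Lemma orbit_sym x y : orbit psi x y -> orbit psi y x.
Proof. intros [g Hg]. exists (ginv g). rewrite <- Hg. apply act_inv. Qed.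

Lemma orb_mem (i : Orb psi) x : proj1_sig i x -> i = orb_of x.
Proof.
  destruct i as [P [x0 E]]. simpl. intro Hx. subst. apply sig_eq. simpl.
  apply functional_extensionality. intro y. apply propositional_extensionality. split; intro H.
  - apply (orbit_trans (orbit_sym Hx) H).
  - apply (orbit_trans Hx H).
Qed.

Lemma mem_op (i : Orb psi) x y : proj1_sig i (op x y) <-> proj1_sig i x.
Proof.
  destruct i as [P [x0 E]]. simpl. subst. rewrite <- act_e. split; intro H.
  - apply (orbit_trans H). apply orbit_sym. exists (e y). reflexivity.
  - apply (orbit_trans H). exists (e y). reflexivity.
Qed.

Definition rep (i : Orb psi) : X := proj1_sig (constructive_indefinite_description _ (proj2_sig i)).
Lemma rep_in i : proj1_sig i (rep i).
Proof.
  unfold rep. destruct (constructive_indefinite_description _ _) as [x E]. simpl. rewrite E. apply orbit_refl.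
Qed.
Lemma rep_in_iff i j : proj1_sig i (rep j) <-> j = i.
Proof.
  split; intro H.
  - rewrite (orb_mem H). apply orb_mem. apply rep_in.
  - subst. apply rep_in.
Qed.

Definition epsv (i : Orb psi) (x : X) : Zgrp := if excluded_middle_informative (proj1_sig i x) then 1%Z else 0%Z.
Lemma epsv_conj i : conj_rel op (epsv i).
Proof.
  intros x y. unfold epsv. simpl.
  destruct (excluded_middle_informative (proj1_sig i (op x y))) as [H|H];
  destruct (excluded_middle_informative (proj1_sig i x)) as [H'|H']; try lia;
  exfalso; rewrite (mem_op i x y) in H; tauto.
Qed.

Lemma is_eps_iff i f : @is_eps X A e psi i f <-> (is_hom f /\ forall x, f (e x) = epsv i x).
Proof.
  unfold is_eps, epsv. split; intros [Hf H]; split; auto; intro x.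
  - destruct (excluded_middle_informative (proj1_sig i x)); apply H; auto.
  - rewrite H. destruct (excluded_middle_informative (proj1_sig i x)); split; intro; tauto.
Qed.

Lemma eps_ex i : exists f, @is_eps X A e psi i f.
Proof.
  destruct (proj2 Hadj Zgrp (epsv i) (epsv_conj i)) as [phi [[H1 H2] _]].
  exists phi. apply is_eps_iff. auto.
Qed.
Lemma eps_unique i f f' : @is_eps X A e psi i f -> @is_eps X A e psi i f' -> f = f'.
Proof.
  rewrite !is_eps_iff. intros [Hf H] [Hf' H'].
  destruct (proj2 Hadj Zgrp (epsv i) (epsv_conj i)) as [phi [_ U]].
  rewrite (U f Hf H), (U f' Hf' H'). reflexivity.
Qed.
Definition epsf (i : Orb psi) : A -> Zgrp := proj1_sig (constructive_indefinite_description _ (eps_ex i)).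
Lemma epsf_spec i : @is_eps X A e psi i (epsf i).
Proof. unfold epsf. destruct (constructive_indefinite_description _ _). auto. Qed.
Lemma epsf_hom i : is_hom (epsf i). Proof. apply epsf_spec. Qed.

Lemma Kset_iff g : Kset e psi g <-> forall i, epsf i g = 0%Z.
Proof.
  split; intro H.
  - intro i. exact (H i (epsf i) (epsf_spec i)).
  - intros i f Hf. rewrite (eps_unique Hf (epsf_spec i)). auto.
Qed.
Lemma Kset_sub : is_subgroup (Kset e psi).
Proof.
  split; [|split]; intros; rewrite Kset_iff in *; intros i.
  - apply (hom_one (epsf_hom i)).
  - rewrite (epsf_hom i). simpl. rewrite H, H0. reflexivity.
  - rewrite (hom_inv (epsf_hom i)). simpl. rewrite H. reflexivity.
Qed.
Lemma Acomm_K b : Acomm b -> Kset e psi b.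
Proof. intros Hb. apply Kset_iff. intro i. apply eps_Acomm; auto. apply epsf_hom. Qed.

Definition ai (i : Orb psi) : A := proj1_sig (constructive_indefinite_description _ (comm_lift (e (rep i)))).
Lemma ai_spec i : Acomm (ai i) /\ psi (ai i) = psi (e (rep i)).
Proof. unfold ai. destruct (constructive_indefinite_description _ _). auto. Qed.
Definition zz (i : Orb psi) : A := gmul (ginv (ai i)) (e (rep i)).
Lemma psi_zz i : psi (zz i) = gone.
Proof. unfold zz. rewrite psi_hom, (hom_inv psi_hom), (proj2 (ai_spec i)). apply gmulVl. Qed.
Lemma zz_central i : central (zz i).
Proof. intro h. apply ker_central. apply psi_zz. Qed.
Lemma ai_zz i : e (rep i) = gmul (ai i) (zz i).
Proof. unfold zz. rewrite gmulA, gmulVr, gmul1l. reflexivity. Qed.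

Definition indo (j i : Orb psi) : Z := if excluded_middle_informative (j = i) then 1%Z else 0%Z.
Lemma eps_zz i f j : @is_eps X A e psi i f -> f (zz j) = indo j i.
Proof.
  intro Hf. pose proof Hf as Hf2. rewrite is_eps_iff in Hf2. destruct Hf2 as [Hh Hv].
  unfold zz. rewrite Hh, (hom_inv Hh), (eps_Acomm Hh (proj1 (ai_spec j))), Hv. simpl.
  unfold epsv, indo. destruct (excluded_middle_informative (proj1_sig i (rep j))) as [H|H];
  destruct (excluded_middle_informative (j = i)) as [E|E]; rewrite ?rep_in_iff in H; try tauto; try lia.
Qed.

Lemma eps_wprod i f l : @is_eps X A e psi i f -> f (wprod zz l) = coef l i.
Proof.
  intro Hf. assert (Hh : is_hom f) by apply Hf.
  induction l as [|[n t] l IH].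
  - apply (hom_one Hh).
  - rewrite wprod_cons, Hh, IH, (hom_zpow Hh). simpl. rewrite zpow_Z, (eps_zz t Hf).
    unfold indo. destruct (excluded_middle_informative (t = i)); lia.
Qed.

Lemma coef_map_nodup (T : Type) (h : T -> Z) (L : list T) i : NoDup L ->
  coef (map (fun t => (h t, t)) L) i = if excluded_middle_informative (In i L) then h i else 0%Z.
Proof.
  induction L as [|a L IH]; intro ND; simpl.
  - destruct (excluded_middle_informative False) as [F|F]; [destruct F|reflexivity].
  - inversion ND; subst. rewrite IH; auto.
    destruct (excluded_middle_informative (a = i)) as [E|E];
    destruct (excluded_middle_informative (a = i \/ In i L)) as [E1|E1];
    destruct (excluded_middle_informative (In i L)) as [E2|E2]; subst; try tauto; lia.
Qed.

Lemma coef_ex (n : Zsum (Orb psi)) : exists l, forall i, coef l i = proj1_sig n i.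
Proof.
  destruct (proj2_sig n) as [L HL].
  set (dec := fun a b : Orb psi => excluded_middle_informative (a = b)).
  exists (map (fun t => (proj1_sig n t, t)) (nodup dec L)). intro i.
  rewrite coef_map_nodup by apply NoDup_nodup.
  destruct (excluded_middle_informative (In i (nodup dec L))) as [H|H]. reflexivity.
  rewrite nodup_In in H. destruct (Z.eq_dec (proj1_sig n i) 0); auto. exfalso. auto.
Qed.

Definition sv (n : Zsum (Orb psi)) : A := wprod zz (proj1_sig (constructive_indefinite_description _ (coef_ex n))).
Lemma sv_spec n l : (forall i, coef l i = proj1_sig n i) -> sv n = wprod zz l.
Proof.
  intro H. unfold sv. destruct (constructive_indefinite_description _ _) as [l' H']. simpl.
  apply wprod_coef. exact zz_central. intro t. rewrite H, H'. reflexivity.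
Qed.
Lemma sv_hom : is_hom sv.
Proof.
  intros n m. destruct (coef_ex n) as [ln Hn], (coef_ex m) as [lm Hm].
  rewrite (sv_spec Hn), (sv_spec Hm), (sv_spec (l := ln ++ lm)), wprod_app. reflexivity.
  intro i. rewrite coef_app, Hn, Hm. reflexivity.
Qed.
Lemma sv_central n : central (sv n).
Proof. unfold sv. apply wprod_central. exact zz_central. Qed.
Lemma psi_sv n : psi (sv n) = gone.
Proof.
  unfold sv. apply (wprod_sub (P := fun g => psi g = gone)).
  - split; [|split]; cbv beta.
    + apply (hom_one psi_hom).
    + intros a b Ha Hb. rewrite psi_hom, Ha, Hb. apply gmul1l.
    + intros a Ha. rewrite (hom_inv psi_hom), Ha. apply inv_one.
  - apply psi_zz.
Qed.
Lemma eps_sv i f n : @is_eps X A e psi i f -> f (sv n) = proj1_sig n i.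
Proof.
  intro Hf. destruct (coef_ex n) as [l Hl]. rewrite (sv_spec Hl), (eps_wprod l Hf). apply Hl.
Qed.

Definition delta (i : Orb psi) : Zsum (Orb psi).
Proof.
  exists (fun j => coef [(1%Z, i)] j). exists [i]. intros j Hj. simpl in Hj.
  destruct (excluded_middle_informative (i = j)). left; auto. lia.
Defined.
Lemma sv_delta i : sv (delta i) = zz i.
Proof.
  rewrite (sv_spec (l := [(1%Z, i)])). rewrite wprod_cons. simpl. rewrite zpow1, gmul1r. reflexivity.
  intro j. reflexivity.
Qed.

Definition Qd (g : A) : Prop := exists b, Acomm b /\ exists n, g = gmul b (sv n).
Lemma Qd_all g : Qd g.
Proof.
  revert g. apply gen.
  - split; [|split].
    + exists gone. split. apply Acomm_sub. exists gone. rewrite (hom_one sv_hom), gmul1l. reflexivity.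
    + intros a b [b1 [H1 [n1 E1]]] [b2 [H2 [n2 E2]]]. exists (gmul b1 b2). split. apply Acomm_sub; auto.
      exists (gmul n1 n2). rewrite sv_hom, E1, E2.
      rewrite <- !gmulA. f_equal. rewrite !gmulA. f_equal. apply sv_central.
    + intros a [b1 [H1 [n1 E1]]]. exists (ginv b1). split. apply Acomm_sub; auto.
      exists (ginv n1). rewrite (hom_inv sv_hom), E1, inv_mul. apply central_sub, sv_central.
  - intro x. set (i := orb_of x).
    destruct (rep_in i) as [h Hh].
    assert (Ex : x = act psi (rep i) (ginv h)) by (rewrite <- Hh; symmetry; apply act_inv).
    set (a := ai i). exists (gmul a (commg a (ginv h))). split.
    + apply Acomm_sub. apply (proj1 (ai_spec i)). apply Acomm_commg.
    + exists (delta i). rewrite sv_delta. rewrite Ex at 1. rewrite e_conj, ai_zz.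
      fold a. set (k := ginv h). unfold commg.
      rewrite !gmulA, gmulVr, gmul1l. rewrite <- (gmulA _ (zz i) k), (zz_central i k), !gmulA. reflexivity.
Qed.

Lemma eps_Qd i f g : @is_eps X A e psi i f -> forall b n, Acomm b -> g = gmul b (sv n) -> f g = proj1_sig n i.
Proof.
  intros Hf b n Hb E. assert (Hh : is_hom f) by apply Hf.
  rewrite E, Hh, (eps_Acomm Hh Hb), (eps_sv n Hf). reflexivity.
Qed.

Lemma Esupp g : exists l, forall i, epsf i g <> 0%Z -> In i l.
Proof.
  destruct (Qd_all g) as [b [Hb [n E]]]. destruct (proj2_sig n) as [l Hl]. exists l.
  intros i Hi. apply Hl. rewrite <- (eps_Qd (epsf_spec i) Hb E). exact Hi.
Qed.
Definition Ev (g : A) : Zsum (Orb psi) := exist _ (fun i => epsf i g) (Esupp g).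
Lemma Ev_hom : is_hom Ev.
Proof. intros a b. apply Zsum_eq. intro i. simpl. apply epsf_hom. Qed.
Lemma Ev_sv n : Ev (sv n) = n.
Proof. apply Zsum_eq. intro i. simpl. apply eps_sv. apply epsf_spec. Qed.
Lemma Ev_K k : Kset e psi k -> Ev k = gone.
Proof. intro H. apply Zsum_eq. intro i. simpl. rewrite Kset_iff in H. apply H. Qed.

Lemma Kproof g : Kset e psi (gmul g (ginv (sv (Ev g)))).
Proof.
  apply Kset_iff. intro i. rewrite (epsf_hom i), (hom_inv (epsf_hom i)), (eps_sv _ (epsf_spec i)). simpl. lia.
Qed.

Definition Fmap (g : A) : prodgrp (Kgrp e psi) (Zsum (Orb psi)) :=
  (exist (fun g => is_subgroup (Kset e psi) -> Kset e psi g) (gmul g (ginv (sv (Ev g)))) (fun _ => Kproof g), Ev g).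

Lemma Kmem (k : Kgrp e psi) : Kset e psi (proj1_sig k).
Proof. apply (proj2_sig k). apply Kset_sub. Qed.

Lemma Fmap_iso : is_iso Fmap.
Proof.
  split.
  - intros a b. apply prod_eq; simpl.
    + apply sig_eq. simpl. rewrite Ev_hom, sv_hom, inv_mul.
      pose proof (central_sub A) as [_ [_ CI]].
      rewrite <- !gmulA. f_equal. rewrite (CI _ (sv_central (Ev a))), !gmulA. reflexivity.
    + apply Ev_hom.
  - exists (fun y : prodgrp (Kgrp e psi) (Zsum (Orb psi)) => gmul (proj1_sig (fst y)) (sv (snd y))). split.
    + intro g. simpl. rewrite <- gmulA, gmulVl, gmul1r. reflexivity.
    + intros [k n]. simpl. assert (Ee : Ev (gmul (proj1_sig k) (sv n)) = n).
      { rewrite Ev_hom, Ev_sv, (Ev_K (Kmem k)). apply gmul1l. }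
      unfold Fmap. f_equal.
      * apply sig_eq. simpl. rewrite Ee, <- gmulA, gmulVr, gmul1r. reflexivity.
      * exact Ee.
Qed.

Definition bq (u : A) : A := proj1_sig (constructive_indefinite_description _ (Qd_all u)).
Lemma bq_spec u : Acomm (bq u) /\ exists n, u = gmul (bq u) (sv n).
Proof. unfold bq. destruct (constructive_indefinite_description _ _). auto. Qed.
Definition kl (u : A) : Kgrp e psi :=
  exist (fun g => is_subgroup (Kset e psi) -> Kset e psi g) (bq u) (fun _ => Acomm_K (proj1 (bq_spec u))).

Lemma commg_bq u v : commg (bq u) (bq v) = commg u v.
Proof.
  destruct (proj2 (bq_spec u)) as [n En], (proj2 (bq_spec v)) as [m Em].
  rewrite En at 2. rewrite Em at 2. rewrite commg_cl, commg_cr; auto; apply sv_central.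
Qed.

Lemma cfold_bq L : cfold (map (mapq bq) L) = cfold L.
Proof.
  induction L as [|q L IH]; simpl. reflexivity. rewrite IH. f_equal.
  unfold cterm, mapq; simpl. rewrite commg_bq. reflexivity.
Qed.

Lemma K_perfect : perfect (Kgrp e psi).
Proof.
  apply perfect_iff. intro k.
  destruct (Qd_all (proj1_sig k)) as [b [[L HL] [n E]]].
  assert (En : n = gone).
  { apply Zsum_eq. intro i. simpl. rewrite <- (eps_Qd (epsf_spec i) (ex_intro _ L HL) E).
    apply Kset_iff. apply Kmem. }
  rewrite En, (hom_one sv_hom), gmul1r in E.
  exists (map (mapq kl) L). apply sig_eq.
  rewrite (hom_cfold _ (@proj1_hom _ (Kset e psi))), map_map.
  rewrite E, HL, <- (cfold_bq L). f_equal.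
Qed.

Definition pK (k : Kgrp e psi) : Inn psi :=
  exist (fun s => is_subgroup InnP -> InnP s) (psi (proj1_sig k)) (fun _ => ex_intro _ (proj1_sig k) eq_refl).

Lemma pK_hom : is_hom pK.
Proof. intros a b. apply sig_eq. simpl. apply psi_hom. Qed.
Lemma pK_surj : forall y, exists x, pK x = y.
Proof.
  intro y. destruct (Qd_all (lift y)) as [b [Hb [n E]]].
  exists (exist (fun g => is_subgroup (Kset e psi) -> Kset e psi g) b (fun _ => Acomm_K Hb)).
  apply sig_eq. simpl. rewrite <- psi_lift, E, psi_hom, psi_sv, gmul1r. reflexivity.
Qed.
Lemma pK_ker : forall k, pK k = gone -> forall g, gmul k g = gmul g k.
Proof.
  intros k Hk g. apply sig_eq. simpl. apply ker_central.
  exact (f_equal (fun y : Inn psi => proj1_sig y) Hk).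
Qed.

Lemma part1 : isomorphic A (prodgrp (Kgrp e psi) (Zsum (Orb psi))) /\ perfect (Kgrp e psi) /\
  central_ext (Kgrp e psi) (Inn psi).
Proof.
  split; [|split].
  - exists Fmap. apply Fmap_iso.
  - apply K_perfect.
  - exists pK. split; [apply pK_hom|split; [apply pK_surj|apply pK_ker]].
Qed.

Lemma part2 : connected psi -> H2_trivial (Inn psi) -> isomorphic A (prodgrp (Inn psi) Zgrp).
Proof.
  intros Hcon HH2. unfold connected in Hcon. destruct Hcon as [[x0] Hc].
  set (o0 := orb_of x0).
  assert (Ho : forall i : Orb psi, i = o0).
  { intro i.
    rewrite (orb_mem (rep_in i)). unfold o0. symmetry. apply orb_mem. simpl. apply Hc. }
  assert (Ip : is_iso pK).
  { apply iso_of_inj. apply pK_hom. apply pK_surj.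
    apply (inj_main pK_hom pK_surj pK_ker K_perfect HH2). }
  set (zmap := fun n : Zsum (Orb psi) => (proj1_sig n o0 : Zgrp)).
  assert (Iz : is_iso zmap).
  { apply iso_of_inj.
    - intros a b. reflexivity.
    - intro m. unshelve eexists (exist _ (fun _ => m) _).
      + exists [o0]. intros i _. left. symmetry. apply Ho.
      + reflexivity.
    - intros n Hn. apply Zsum_eq. intro i. rewrite (Ho i). exact Hn. }
  pose proof (iso_comp Fmap_iso (iso_prod Ip Iz)) as I.
  eexists. exact I.
Qed.
End Q.

Theorem proposition3p3 (X : Type) (op : X -> X -> X) (A : grp) (e : X -> A)
    (psi : A -> Sym X) :
  is_quandle op -> is_adjoint op A e -> is_psi op A e psi ->
  (perfect (Inn psi) ->
     isomorphic A (prodgrp (Kgrp e psi) (Zsum (Orb psi))) /\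
     perfect (Kgrp e psi) /\
     central_ext (Kgrp e psi) (Inn psi)) /\
  (connected psi -> perfect (Inn psi) -> H2_trivial (Inn psi) ->
     isomorphic A (prodgrp (Inn psi) Zgrp)).
Proof.
  intros Hq Hadj Hpsi. split.
  - intro Hperf. eapply part1; eauto.
  - intros Hc Hperf HH2. eapply part2; eauto.
Qed.
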